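(* Let $S=\{\rho_1=0<\rho_2<\cdots\}$ be an Arf numerical semigroup with conductor $c=\rho_r$. Let $d$ be an odd integer with $1\le d\le 2r-3$, write $d=2t+1$, and put $p_t=c+\rho_{t+1}-1$. Then $$\{\rho\in S:\ \#A[\rho]<d\}\subseteq[0,p_t]\cap S.$$
   Context: A numerical semigroup is a submonoid $S$ of $(\mathbb{N}_0,+)$ with finite complement, with elements listed increasingly. $S$ is Arf if $\rho_i+\rho_j-\rho_k\in S$ for all positive integers $i\ge j\ge k$. The conductor $c$ is the smallest integer such that all integers $\ge c$ lie in $S$, with $c=\rho_r$. For $\rho\in S$, $A[\rho]=\{p\in S:\ \rho-p\in S\}$. *)

(* Defs.v *)
From mathcomp Require Import all_boot.
Set Implicit Arguments. Unset Strict Implicit. Unset Printing Implicit Defensive.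

Definition numerical_semigroup (S : pred nat) : Prop :=
  [/\ S 0, (forall a b, S a -> S b -> S (a + b)) &
      exists N, forall n, N <= n -> S n].

(* rho is the increasing enumeration of S, 1-indexed: rho i is the element
   of S having exactly i-1 elements of S below it (rho 1 = 0 < rho 2 < ...). *)
Definition is_enumeration (S : pred nat) (rho : nat -> nat) : Prop :=
  forall i, 1 <= i -> S (rho i) /\ count S (iota 0 (rho i)) = i.-1.

Definition Arf (S : pred nat) (rho : nat -> nat) : Prop :=
  forall i j k, 1 <= k -> k <= j -> j <= i -> S (rho i + rho j - rho k).

Definition is_conductor (S : pred nat) (c : nat) : Prop :=
  (forall n, c <= n -> S n) /\
  (forall c', (forall n, c' <= n -> S n) -> c <= c').

(* #A[x] where A[x] = {p in S : x - p in S} (necessarily p <= x) *)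
Definition cardA (S : pred nat) (x : nat) : nat :=
  count (fun p => S p && S (x - p)) (iota 0 x.+1).

(* Main.v *)
Require Import Defs.
From mathcomp Require Import all_boot.
From mathcomp Require Import zify.

Lemma count_refl (a b : pred nat) x :
  (forall i, i <= x -> b (x - i) = a i) ->
  count b (iota 0 x.+1) = count a (iota 0 x.+1).
Proof.
move=> H.
have E : forall c : pred nat, count c (iota 0 x.+1) = \sum_(0 <= i < x.+1 | c i) 1.
  by move=> c; rewrite sum1_count /index_iota subn0.
rewrite !E big_nat_rev /=.
rewrite big_nat_cond [in RHS]big_nat_cond.
apply: eq_bigl => i; case hi: (0 <= i < x.+1) => //=.
by rewrite add0n subSS H //; move: hi => /andP [_]; rewrite ltnS.
Qed.

Lemma count_S_prefix (S : pred nat) m n : m < n -> S m ->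
  count S (iota 0 m) < count S (iota 0 n).
Proof.
move=> mn Sm.
have -> : n = m + (n - m) by lia.
rewrite iotaD count_cat add0n.
have -> : n - m = (n - m - 1).+1 by lia.
rewrite /= Sm; lia.
Qed.

Theorem mainTheorem13 (S : pred nat) (rho : nat -> nat) (r t : nat) :
  numerical_semigroup S ->
  is_enumeration S rho ->
  Arf S rho ->
  1 <= r ->
  is_conductor S (rho r) ->
  2 * t + 1 <= 2 * r - 3 ->
  forall x : nat, S x -> cardA S x < 2 * t + 1 ->
    (x <= rho r + rho t.+1 - 1) && S x.
Proof.
move=> [S0 _ _] En _ r1 [Cc _] ht x Sx hc.
rewrite Sx andbT.
have [Sk ck] := En t.+1 isT.
have [Sc cc] := En r r1.
set c := rho r in Cc Sc cc *; set k := rho t.+1 in Sk ck *.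
have kc : k < c.
  rewrite ltnNge; apply/negP => ck'.
  move: ck'; rewrite leq_eqVlt => /orP [/eqP e | ck'].
    have : count S (iota 0 c) = count S (iota 0 k) by rewrite e.
    rewrite cc ck; lia.
  have := @count_S_prefix S c k ck' Sc; rewrite ck cc /=; lia.
rewrite leqNgt; apply/negP => hx.
have {}hx : c + k <= x by lia.
move: hc; apply/negP; rewrite -leqNgt.
pose a := fun p => S p && (p <= k).
pose b := fun p => S (x - p) && (x - p <= k).
have Ha : count a (iota 0 x.+1) = t.+1.
  have -> : x.+1 = k.+1 + (x - k) by lia.
  rewrite iotaD count_cat add0n.
  have -> : count a (iota k.+1 (x - k)) = 0.
    apply/eqP; rewrite -leqn0 -(count_pred0 (iota k.+1 (x - k))).
    rewrite leq_eqVlt; apply/orP; left; apply/eqP.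
    apply: eq_in_count => p; rewrite mem_iota => /andP [h1 _].
    by rewrite /a /=; apply/negbTE; rewrite negb_and; apply/orP; right; lia.
  rewrite addn0 -addn1 iotaD count_cat add0n /= addn0.
  have -> : count a (iota 0 k) = count S (iota 0 k).
    apply: eq_in_count => p; rewrite mem_iota => /andP [_ h].
    by rewrite /a (ltnW h) andbT.
  by rewrite ck /a Sk leqnn addn1.
have Hb : count b (iota 0 x.+1) = t.+1.
  rewrite -Ha; apply: count_refl => i hi.
  by rewrite /a /b (_ : x - (x - i) = i) //; lia.
have Hab : count (predI a b) (iota 0 x.+1) = 0.
  apply/eqP; rewrite eqn0Ngt -has_count; apply/hasPn => p _.
  by rewrite /= /a /b; apply/negP => /andP [/andP [_ h1] /andP [_ h2]]; lia.
have Hsub : count (predU a b) (iota 0 x.+1) <= cardA S x.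
  apply: sub_count => p; rewrite /= /a /b => /orP [/andP [Sp pk] | /andP [Sxp xpk]].
    by rewrite Sp /=; apply: Cc; lia.
  rewrite Sxp andbT; apply: Cc.
  by case: (leqP p x) => h; lia.
have := count_predUI a b (iota 0 x.+1).
rewrite Ha Hb Hab; lia.
Qed.
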